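(* Let $k\in\{0,1,2,\dots\}$ and define the polynomial \[ V_k(x)=2\cdot\frac{(2k+2)!}{\left(-\tfrac12\right)_{2k+2}}\sum_{\ell=0}^{2k+1}\frac{(-1)^\ell\,\left(\ell+\tfrac12\right)_{2k+1-\ell}}{(2k+1-\ell)!\,(\ell+1)}\,x^{\ell+1}, \] and the function \[ \psi_k(x)=-\frac{(2k+2)!}{\pi\left(-\tfrac12\right)_{2k+2}}\,x^{1/2}(1-x)^{2k+1/2},\qquad x\in[0,1]. \] Then $\psi_k(x)>0$ for $x\in(0,1)$, $\int_0^1\psi_k(s)\,ds=1$, and \[ 2\,\mathrm{PV}\!\int_0^1\frac{\psi_k(s)}{x-s}\,ds=V_k'(x)\qquad\text{for all }x\in(0,1), \] where $\mathrm{PV}$ denotes the Cauchy principal value integral. (These are the variational (Euler–Lagrange) conditions on the support identifying $\psi_k(x)\,dx$ as the equilibrium measure of $V_k$, i.e.\ the limiting mean eigenvalue density of the unitary ensemble $\frac{1}{Z_n}e^{-n\,\mathrm{tr}\,V_k(M)}dM$, which is supported on $[0,1]$ and vanishes like $(1-x)^{2k+1/2}$ at the right endpoint.)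
   Context: $(a)_m=a(a+1)\cdots(a+m-1)$ denotes the Pochhammer symbol, with $(a)_0=1$. The equilibrium measure $\mu_V$ of an external field $V$ is the unique minimizer of $I_V(\mu)=\iint\log\frac{1}{|x-y|}d\mu(x)d\mu(y)+\int V\,d\mu$ over Borel probability measures $\mu$ on $\mathbb R$; on its support it satisfies $2\int\log|x-y|\,d\mu(y)-V(x)=\text{const}$, whose derivative on the interior of the support is the principal value equation above. *)

(* Defs.v *)
From Stdlib Require Import Arith Reals Lra.
Open Scope R_scope.

Fixpoint poch (a : R) (m : nat) : R :=
  match m with
  | O => 1
  | S m' => poch a m' * (a + INR m')
  end.

Definition cst (k : nat) : R :=
  INR (fact (2 * k + 2)) / poch (-1/2) (2 * k + 2).

Definition Vk (k : nat) (x : R) : R :=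
  2 * cst k *
  sum_f_R0 (fun l => (-1) ^ l * poch (INR l + 1/2) (2 * k + 1 - l)
                     / (INR (fact (2 * k + 1 - l)) * (INR l + 1)) * x ^ (l + 1))
           (2 * k + 1).

Definition psik (k : nat) (x : R) : R :=
  - (cst k / PI) * sqrt x * ((1 - x) ^ (2 * k) * sqrt (1 - x)).

(* Cauchy principal value: PV int_a^b f(s)/(x-s) ds = L, i.e.
   lim_{eps -> 0+} ( int_a^{x-eps} + int_{x+eps}^b ) f(s)/(x-s) ds = L,
   where for all small eps both integrals exist. *)
Definition PV_cauchy (f : R -> R) (a b x L : R) : Prop :=
  forall e, 0 < e -> exists d, 0 < d /\
    forall eps, 0 < eps < d ->
      exists (pr1 : Riemann_integrable (fun s => f s / (x - s)) a (x - eps))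
             (pr2 : Riemann_integrable (fun s => f s / (x - s)) (x + eps) b),
        Rabs (RiemannInt pr1 + RiemannInt pr2 - L) < e.

(* Main.v *)
Require Import Defs.
From Stdlib Require Import Arith Reals Lra Lia.
From Coquelicot Require Import Coquelicot.
Open Scope R_scope.

Lemma cont_eq (f : R -> R) x : continuity_pt f x <-> continuous f x.
Proof. split; [apply continuity_pt_filterlim | apply continuity_pt_filterlim]. Qed.
Lemma sqrt_cont (x : R) : continuity_pt sqrt x.
Proof.
  destruct (Rlt_or_le x 0) as [H|H].
  - intros e He. exists (-x). split; [lra|].
    intros y [_ Hy]. unfold dist; simpl; unfold R_dist in *.
    rewrite (sqrt_neg_0 x) by lra.
    rewrite (sqrt_neg_0 y). rewrite Rminus_0_r, Rabs_R0; lra.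
    apply Rabs_def2 in Hy. lra.
  - now apply continuity_pt_sqrt.
Qed.

Lemma c_plus (f g : R -> R) x : continuous f x -> continuous g x -> continuous (fun t => f t + g t) x.
Proof. intros; apply (continuous_plus f g); auto. Qed.
Lemma c_minus (f g : R -> R) x : continuous f x -> continuous g x -> continuous (fun t => f t - g t) x.
Proof. intros; apply (continuous_minus f g); auto. Qed.
Lemma c_mult (f g : R -> R) x : continuous f x -> continuous g x -> continuous (fun t => f t * g t) x.
Proof. intros; apply (continuous_mult f g); auto. Qed.
Lemma c_opp (f : R -> R) x : continuous f x -> continuous (fun t => - f t) x.
Proof. intros; apply (continuous_opp f); auto. Qed.
Lemma c_sqrt (f : R -> R) x : continuous f x -> continuous (fun t => sqrt (f t)) x.
Proof. intros; apply (continuous_comp f sqrt); auto. apply cont_eq, sqrt_cont. Qed.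
Lemma c_atan (f : R -> R) x : continuous f x -> continuous (fun t => atan (f t)) x.
Proof. intros; apply (continuous_comp f atan); auto. apply cont_eq.
  apply derivable_continuous_pt. exists (/ (1 + (f x)^2)). apply derivable_pt_lim_atan. Qed.
Lemma c_pow (f : R -> R) n x : continuous f x -> continuous (fun t => f t ^ n) x.
Proof. intros H; induction n; simpl. apply continuous_const. apply c_mult; auto. Qed.
Lemma c_inv (f : R -> R) x : f x <> 0 -> continuous f x -> continuous (fun t => / f t) x.
Proof. intros H1 H2; apply (continuous_comp f Rinv); auto. apply cont_eq.
  apply derivable_continuous_pt. exists (- / (f x)^2). apply is_derive_Reals.
  auto_derive; auto. field; auto. Qed.
Lemma c_div (f g : R -> R) x : g x <> 0 -> continuous f x -> continuous g x -> continuous (fun t => f t / g t) x.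
Proof. intros; apply c_mult; auto; apply c_inv; auto. Qed.
Lemma c_ln (f : R -> R) x : 0 < f x -> continuous f x -> continuous (fun t => ln (f t)) x.
Proof. intros H1 H2; apply (continuous_comp f ln); auto. apply cont_eq.
  apply derivable_continuous_pt. exists (/ f x). apply derivable_pt_lim_ln; auto. Qed.

Ltac cont := repeat first [ apply continuous_const | apply continuous_id | apply c_plus | apply c_minus
  | apply c_mult | apply c_opp | apply c_sqrt | apply c_atan | apply c_pow ].

Definition w (s : R) := sqrt s * sqrt (1 - s).
Definition Th (s : R) := 4 * atan (sqrt s / (1 + sqrt (1 - s))).

Lemma cont_w x : continuous w x.
Proof. unfold w. cont. Qed.
Lemma cont_Th x : continuous Th x.
Proof. unfold Th. apply c_mult. cont. apply c_atan, c_div.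
  pose proof (sqrt_pos (1-x)); lra. cont. cont. Qed.

Definition clamp (a b z : R) := Rmax a (Rmin b z).

Lemma clamp_in a b z : a <= b -> a <= clamp a b z <= b.
Proof. intros; unfold clamp, Rmax, Rmin; repeat destruct Rle_dec; lra. Qed.

Lemma clamp_id a b z : a <= z <= b -> clamp a b z = z.
Proof. intros; unfold clamp, Rmax, Rmin; repeat destruct Rle_dec; lra. Qed.

Lemma clamp_cont a b z : a <= b -> continuity_pt (clamp a b) z.
Proof.
  intros Hab. unfold clamp.
  intros e He. exists e. split; auto.
  intros y [_ Hy]. unfold dist in *; simpl in *; unfold R_dist in *.
  unfold Rmax, Rmin; repeat destruct Rle_dec; apply Rabs_def2 in Hy; apply Rabs_def1; lra.
Qed.

Lemma ftc (f F : R -> R) (a b : R) : a <= b ->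
  (forall z, a <= z <= b -> continuity_pt f z) ->
  (forall z, a <= z <= b -> continuity_pt F z) ->
  (forall z, a < z < b -> derivable_pt_lim F z (f z)) ->
  RInt f a b = F b - F a.
Proof.
  intros Hab Hf HF HD.
  set (g := fun z => f (clamp a b z)).
  assert (Hg : forall z, continuous g z).
  { intro z. apply cont_eq. unfold g.
    apply (continuity_pt_comp (clamp a b) f). apply clamp_cont; auto.
    apply Hf, clamp_in; auto. }
  assert (Hex : forall u v, ex_RInt g u v).
  { intros u v. apply (@ex_RInt_continuous R_CompleteNormedModule). intros; apply Hg. }
  assert (HI : forall y, is_derive (fun t => RInt g a t) y (g y)).
  { intro y. apply is_derive_RInt with a.
    apply filter_forall. intro t. apply RInt_correct, Hex. apply Hg. }
  assert (Heq : RInt f a b = RInt g a b).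
  { apply RInt_ext. intros z Hz. unfold g. rewrite clamp_id; auto.
    rewrite Rmin_left, Rmax_right in Hz; lra. }
  rewrite Heq.
  destruct (MVT_gen (fun t => F t - RInt g a t) a b (fun _ => 0)) as [c [_ Hc]].
  - intros z Hz. rewrite Rmin_left, Rmax_right in Hz by lra.
    replace 0 with (f z - g z).
    apply (is_derive_minus F (fun t => RInt g a t)). apply is_derive_Reals, HD; auto. apply HI.
    unfold g; rewrite clamp_id; lra.
  - intros z Hz. rewrite Rmin_left, Rmax_right in Hz by lra.
    apply continuity_pt_minus. apply HF; auto.
    apply derivable_continuous_pt. exists (g z). apply is_derive_Reals, HI.
  - rewrite RInt_point in Hc. unfold zero in Hc; simpl in Hc. lra.
Qed.

Lemma sq_facts s : 0 < s < 1 -> sqrt s * sqrt s = s /\ sqrt (1-s) * sqrt (1-s) = 1 - s /\ 0 < sqrt s /\ 0 < sqrt (1 - s).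
Proof. intros. repeat split; try (apply sqrt_sqrt; lra); apply sqrt_lt_R0; lra. Qed.

Lemma div0 a b : a = 0 -> a / b = 0.
Proof. intros ->; unfold Rdiv; ring. Qed.

Lemma d_w s : 0 < s < 1 -> is_derive w s ((1 - 2*s) / (2 * w s)).
Proof.
  intros Hs. unfold w. auto_derive. lra.
  replace (1 + - s) with (1 - s) by ring.
  destruct (sq_facts s Hs) as [Hp [Hq [Hp0 Hq0]]].
  set (p := sqrt s) in *. set (q := sqrt (1-s)) in *.
  clearbody p q. assert (Es : s = p*p) by lra. subst s.
  apply Rminus_diag_uniq. field_simplify; try lra. apply div0. nra.
Qed.

Lemma d_Th s : 0 < s < 1 -> is_derive Th s (1 / w s).
Proof.
  intros Hs. unfold Th, w. auto_derive.
  pose proof (sqrt_pos (1 + - s)); repeat split; lra.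
  replace (1 + - s) with (1 - s) by ring.
  destruct (sq_facts s Hs) as [Hp [Hq [Hp0 Hq0]]].
  set (p := sqrt s) in *. set (q := sqrt (1-s)) in *.
  assert (Hpq : p*p + q*q = 1) by lra.
  clearbody p q. assert (Es : s = p*p) by lra. subst s.
  apply Rminus_diag_uniq. field_simplify; try lra. apply div0. nra.
Qed.

Lemma qred p q n : q*q = 1 - p*p -> q^(S (S n)) = q^n * (1 - p*p).
Proof. intros H. simpl. rewrite <- H. ring. Qed.

Ltac qfin p q Hq := repeat rewrite (qred p q _ Hq); ring.

Ltac sqprep s Hs :=
  try replace (1 + - s) with (1 - s) in * by ring;
  let Hp := fresh "Hp" in let Hq := fresh "Hq" in let Hp0 := fresh "Hp0" in let Hq0 := fresh "Hq0" in
  destruct (sq_facts s Hs) as [Hp [Hq [Hp0 Hq0]]];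
  let p := fresh "p" in let q := fresh "q" in
  set (p := sqrt s) in *; set (q := sqrt (1-s)) in *;
  clearbody p q;
  let Es := fresh "Es" in assert (Es : s = p*p) by lra; subst s.

Definition F0 (s : R) := (2*s-1) * w s / 4 + Th s / 8.

Lemma d_F0 s : 0 < s < 1 -> is_derive F0 s (w s).
Proof.
  intros Hs. unfold F0, Th, w. auto_derive.
  pose proof (sqrt_pos (1 + - s)); repeat split; lra.
  sqprep s Hs.
  apply Rminus_diag_uniq. field_simplify; try lra. apply div0. qfin p q Hq.
Qed.

Definition Fj (j : nat) (s : R) := (1-s)^(S j) * s * w s.

Lemma d_Fj j s : 0 < s < 1 -> is_derive (Fj j) s
   (-(INR j + 3/2) * (1-s)^j * w s + (INR j + 3) * (1-s)^(S j) * w s).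
Proof.
  intros Hs. unfold Fj, w. auto_derive.
  repeat split; lra.
  sqprep s Hs.
  change (match j with | 0%nat => 1 | S _ => INR j + 1 end) with (INR (S j)).
  rewrite S_INR. simpl pow. set (a := (1 - p*p)^j).
  apply Rminus_diag_uniq. field_simplify; try lra. apply div0. qfin p q Hq.
Qed.

Ltac toR := match goal with |- ?a = ?b => change (@eq R a b) end.

Lemma deriv_eq (f : R -> R) x l l' : is_derive f x l -> l = l' -> is_derive f x l'.
Proof. intros H ->; auto. Qed.

Lemma RInt_lin2 (f g : R->R) a b (al be : R) : ex_RInt f a b -> ex_RInt g a b ->
  RInt (fun s => al * f s + be * g s) a b = al * RInt f a b + be * RInt g a b.
Proof.
  intros Hf Hg. apply (@is_RInt_unique R_CompleteNormedModule).
  apply (@is_RInt_plus R_NormedModule (fun s => al * f s) (fun s => be * g s)).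
  apply (@is_RInt_scal R_NormedModule f a b al). apply (@RInt_correct R_CompleteNormedModule); auto.
  apply (@is_RInt_scal R_NormedModule g a b be). apply (@RInt_correct R_CompleteNormedModule); auto.
Qed.

Lemma ex_cont (f : R -> R) a b : (forall x, continuous f x) -> ex_RInt f a b.
Proof. intros H. apply (@ex_RInt_continuous R_CompleteNormedModule). intros; apply H. Qed.

Definition Mf (j : nat) (s : R) := (1-s)^j * w s.
Lemma cont_Mf j x : continuous (Mf j) x.
Proof. unfold Mf. apply c_mult. cont. apply cont_w. Qed.

Fixpoint mm (j : nat) : R := match j with O => 1/8 | S j' => mm j' * (INR j' + 3/2) / (INR j' + 3) end.

Lemma w0 : w 0 = 0.
Proof. unfold w. rewrite sqrt_0. ring. Qed.
Lemma w1 : w 1 = 0.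
Proof. unfold w. replace (1-1) with 0 by ring. rewrite sqrt_0. ring. Qed.

Lemma M0 : RInt (Mf 0) 0 1 = PI / 8.
Proof.
  rewrite (ftc (Mf 0) F0 0 1); try lra.
  - unfold F0. rewrite w0, w1. unfold Th. rewrite sqrt_0, sqrt_1.
    replace (1-1) with 0 by ring. rewrite sqrt_0.
    replace (1/(1+0)) with 1 by field. replace (0/(1+1)) with 0 by field.
    rewrite atan_1. rewrite Rminus_0_r, sqrt_1. match goal with |- ?a = ?b => change (@eq R a b) end.
    replace (0 / (1 + 1)) with 0 by field. rewrite atan_0. field.
  - intros; apply cont_eq, cont_Mf.
  - intros; apply cont_eq. unfold F0. apply c_plus; apply c_mult.
      apply c_mult. cont. apply cont_w. cont. apply cont_Th. cont.
  - intros z Hz. apply is_derive_Reals. unfold Mf. simpl. rewrite Rmult_1_l. apply d_F0; auto.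
Qed.

Lemma Mrec j : (INR j + 3) * RInt (Mf (S j)) 0 1 = (INR j + 3/2) * RInt (Mf j) 0 1.
Proof.
  assert (H := ftc (fun s => -(INR j + 3/2) * Mf j s + (INR j + 3) * Mf (S j) s) (Fj j) 0 1).
  rewrite RInt_lin2 in H by (apply ex_cont; apply cont_Mf).
  assert (E : -(INR j + 3/2) * RInt (Mf j) 0 1 + (INR j + 3) * RInt (Mf (S j)) 0 1 = Fj j 1 - Fj j 0).
  { apply H; try lra.
    - intros; apply cont_eq. apply c_plus; apply c_mult; try apply continuous_const; apply cont_Mf.
    - intros; apply cont_eq. unfold Fj. apply c_mult. cont. apply cont_w.
    - intros z Hz. apply is_derive_Reals. eapply deriv_eq. apply d_Fj; auto. unfold Mf; toR; ring. }
  unfold Fj in E. rewrite w0, w1 in E. rewrite !Rmult_0_r in E. lra.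
Qed.

Lemma Mval j : RInt (Mf j) 0 1 = PI * mm j.
Proof.
  induction j.
  - rewrite M0. simpl. field.
  - simpl. pose proof (Mrec j) as H. pose proof (pos_INR j).
    apply (Rmult_eq_reg_l (INR j + 3)); [|lra]. rewrite H, IHj. field. lra.
Qed.

Lemma poch_S_left a m : poch a (S m) = a * poch (a+1) m.
Proof.
  induction m.
  - simpl. ring.
  - change (poch a (S (S m))) with (poch a (S m) * (a + INR (S m))).
    rewrite IHm. change (poch (a+1) (S m)) with (poch (a+1) m * (a + 1 + INR m)). rewrite S_INR. ring.
Qed.

Lemma poch_pos a m : 0 < a -> 0 < poch a m.
Proof.
  intros Ha. induction m; simpl. lra. pose proof (pos_INR m). apply Rmult_lt_0_compat; lra.
Qed.

Lemma fact_pos m : 0 < INR (fact m).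
Proof. apply lt_0_INR, lt_O_fact. Qed.

Lemma mm_formula n : mm n = poch (1/2) (S n) / (INR (fact (S n)) * 2 * (INR n + 2)).
Proof.
  induction n.
  - simpl. field.
  - change (mm (S n)) with (mm n * (INR n + 3/2) / (INR n + 3)). rewrite IHn.
    change (poch (1/2) (S (S n))) with (poch (1/2) (S n) * (1/2 + INR (S n))).
    rewrite (fact_simpl (S n)), mult_INR. rewrite !S_INR.
    pose proof (pos_INR n). pose proof (fact_pos (S n)). try rewrite S_INR in *.
    field. lra.
Qed.

Lemma cst_neg k : cst k < 0.
Proof.
  unfold cst. replace (2*k+2)%nat with (S (2*k+1)) by lia.
  rewrite poch_S_left. pose proof (fact_pos (S (2*k+1))).
  pose proof (poch_pos (-1/2 + 1) (2*k+1) ltac:(lra)).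
  unfold Rdiv. apply Rmult_pos_neg; auto. apply Rinv_neg. nra.
Qed.

Lemma cst_mm k : cst k * mm (2*k) = -1.
Proof.
  unfold cst. rewrite mm_formula. replace (2*k+2)%nat with (S (S (2*k))) by lia.
  rewrite poch_S_left. replace (-1/2 + 1) with (1/2) by field.
  rewrite (fact_simpl (S (2*k))), mult_INR, S_INR, S_INR.
  pose proof (fact_pos (S (2*k))). pose proof (poch_pos (1/2) (S (2*k)) ltac:(lra)).
  pose proof (pos_INR (2*k)). field. repeat split; lra.
Qed.

Definition cf (n l : nat) : R :=
  (-1)^l * poch (INR l + 1/2) (n+1-l) / INR (fact (n+1-l)).
Definition LL (n : nat) (x : R) : R := sum_f_R0 (fun l => cf n l * x^l) (n+1).
Fixpoint RR (b : R) (n : nat) : R := match n with O => 0 | S m => mm m + b * RR b m end.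

Lemma cf_pascal n i : (i <= n)%nat -> cf (S n) (S i) = cf n (S i) - cf n i.
Proof.
  intros Hi. unfold cf.
  replace (S n + 1 - S i)%nat with (S (n - i)) by lia.
  replace (n + 1 - S i)%nat with (n - i)%nat by lia.
  replace (n + 1 - i)%nat with (S (n - i)) by lia.
  set (m := (n - i)%nat).
  change (poch (INR (S i) + 1/2) (S m)) with (poch (INR (S i) + 1/2) m * (INR (S i) + 1/2 + INR m)).
  rewrite (poch_S_left (INR i + 1/2) m).
  replace (INR i + 1/2 + 1) with (INR (S i) + 1/2) by (rewrite S_INR; ring).
  rewrite (fact_simpl m), mult_INR, S_INR, S_INR. simpl pow.
  pose proof (fact_pos m). pose proof (pos_INR m).
  field. lra.
Qed.

Lemma cf_0 n : cf (S n) 0 = cf n 0 - mm n.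
Proof.
  unfold cf. rewrite mm_formula. change (INR 0) with 0. rewrite Rplus_0_l.
  replace (S n + 1 - 0)%nat with (S (S n)) by lia.
  replace (n + 1 - 0)%nat with (S n) by lia.
  change (poch (1/2) (S (S n))) with (poch (1/2) (S n) * (1/2 + INR (S n))).
  rewrite (fact_simpl (S n)), mult_INR, !S_INR. simpl pow.
  pose proof (fact_pos (S n)). pose proof (pos_INR n). try rewrite S_INR in *.
  field. lra.
Qed.

Lemma cf_top n : cf (S n) (S n + 1) = - cf n (n + 1).
Proof.
  unfold cf. replace (S n + 1 - (S n + 1))%nat with 0%nat by lia.
  replace (n + 1 - (n + 1))%nat with 0%nat by lia.
  replace (S n + 1)%nat with (S (n+1)) by lia. simpl. field.
Qed.

Lemma LL_rec n x : LL (S n) x = (1 - x) * LL n x - mm n.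
Proof.
  unfold LL.
  replace (S n + 1)%nat with (S (S n)) by lia.
  replace (n + 1)%nat with (S n) by lia.
  set (S1 := sum_f_R0 (fun l => cf n l * x^l) (S n)).
  assert (E1 : S1 = cf n 0 * x^0 + sum_f_R0 (fun i => cf n (S i) * x ^ S i) n).
  { unfold S1. rewrite decomp_sum by lia. reflexivity. }
  assert (Hx : x * S1 =
     sum_f_R0 (fun i => cf n i * x ^ S i) n + cf n (S n) * x ^ S (S n)).
  { unfold S1. rewrite scal_sum, tech5. f_equal. apply sum_eq; intros; simpl; ring. simpl; ring. }
  rewrite decomp_sum by lia. simpl pred. rewrite tech5.
  assert (Hs : sum_f_R0 (fun i => cf (S n) (S i) * x ^ S i) n =
     sum_f_R0 (fun i => cf n (S i) * x ^ S i) n - sum_f_R0 (fun i => cf n i * x ^ S i) n).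
  { rewrite <- minus_sum. apply sum_eq. intros i Hi. rewrite cf_pascal by lia. ring. }
  replace ((1 - x) * S1) with (S1 - x * S1) by ring.
  rewrite Hx. rewrite E1 at 1. rewrite Hs, cf_0.
  pose proof (cf_top n) as Ht. replace (S n + 1)%nat with (S (S n)) in Ht by lia.
  replace (n + 1)%nat with (S n) in Ht by lia. rewrite Ht. ring.
Qed.

Lemma LL_closed n x : LL n x = - (RR (1-x) n + (1-x)^n * (x - 1/2)).
Proof.
  induction n.
  - unfold LL, cf. simpl. field.
  - rewrite LL_rec, IHn. simpl. ring.
Qed.

Definition A (x s : R) := sqrt x * sqrt (1-s) + sqrt (1-x) * sqrt s.
Definition Fs (x s : R) := (x - 1/2) * Th s - w s + w x * (2 * ln (A x s) - ln ((x-s)^2) / 2).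

Lemma d_Fs x s : 0 < x < 1 -> 0 < s < 1 -> s <> x -> is_derive (Fs x) s (w s / (x - s)).
Proof.
  intros Hx Hs Hsx.
  assert (HA : 0 < A x s).
  { unfold A. destruct (sq_facts s Hs) as [_ [_ [H1 H2]]]. destruct (sq_facts x Hx) as [_ [_ [H3 H4]]]. nra. }
  assert (Hxs : 0 < (x - s)^2).
  { replace ((x-s)^2) with (Rsqr (x-s)) by (unfold Rsqr; ring). apply Rsqr_pos_lt. lra. }
  unfold Fs, Th, w, A. unfold A in HA. auto_derive.
  { replace (1 + - s) with (1 - s) by ring. pose proof (sqrt_pos (1 - s)).
    repeat split; try lra. }
  destruct (sq_facts x Hx) as [Hu [Hv [Hu0 Hv0]]].
  set (u := sqrt x) in *. set (v := sqrt (1-x)) in *. clearbody u v.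
  assert (Ex : x = u*u) by lra. subst x.
  sqprep s Hs.
  apply Rminus_diag_uniq. field_simplify.
  - apply div0. repeat rewrite (qred u v _ Hv). repeat rewrite (qred p q _ Hq). ring.
  - repeat split; try lra; nra.
Qed.

Fixpoint qq (b : R) (n : nat) (s : R) : R :=
  match n with O => 0 | S m => (1-s)^m + b * qq b m s end.

Lemma qq_id x n s : qq (1-x) n s * (x - s) = (1-s)^n - (1-x)^n.
Proof.
  induction n; simpl. ring.
  replace (((1 - s) ^ n + (1 - x) * qq (1 - x) n s) * (x - s)) with
     ((1 - s) ^ n * (x - s) + (1 - x) * (qq (1 - x) n s * (x - s))) by ring.
  rewrite IHn. ring.
Qed.

Lemma cont_qq b n s : continuous (qq b n) s.
Proof. induction n; simpl. apply continuous_const. apply c_plus. cont. apply c_mult. apply continuous_const. auto. Qed.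

Definition hh (b : R) (n : nat) (s : R) := qq b n s * w s.
Lemma cont_hh b n s : continuous (hh b n) s.
Proof. unfold hh. apply c_mult. apply cont_qq. apply cont_w. Qed.

Lemma RInt_hh b n : RInt (hh b n) 0 1 = PI * RR b n.
Proof.
  induction n.
  - simpl. rewrite (RInt_ext _ (fun s => 0 * w s + 0 * w s)).
    rewrite RInt_lin2 by (apply ex_cont; apply cont_w). toR; ring.
    intros; unfold hh; simpl; ring.
  - rewrite (RInt_ext _ (fun s => 1 * Mf n s + b * hh b n s)).
    rewrite RInt_lin2 by (apply ex_cont; first [apply cont_Mf | apply cont_hh]).
    rewrite Mval, IHn. simpl. toR; ring.
    intros; unfold hh, Mf; simpl; ring.
Qed.

Lemma Th0 : Th 0 = 0.
Proof. unfold Th. rewrite sqrt_0. replace (0 / (1 + sqrt (1 - 0))) with 0. rewrite atan_0; ring.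
  unfold Rdiv; ring. Qed.
Lemma Th1 : Th 1 = PI.
Proof. unfold Th. rewrite sqrt_1. replace (1-1) with 0 by ring. rewrite sqrt_0.
  replace (1 / (1 + 0)) with 1 by field. rewrite atan_1. field. Qed.

Lemma ln_sqrt' y : 0 < y -> ln (sqrt y) = ln y / 2.
Proof. intros Hy. pose proof (sqrt_lt_R0 y Hy).
  rewrite <- (sqrt_sqrt y) at 2 by lra. rewrite ln_mult by auto. field. Qed.

Lemma Fs_diff x : 0 < x < 1 -> Fs x 1 - Fs x 0 = (x - 1/2) * PI.
Proof.
  intros Hx. unfold Fs, A. rewrite Th0, Th1, w0, w1, sqrt_0, sqrt_1.
  replace (1-1) with 0 by ring. rewrite sqrt_0. replace (1-0) with 1 by ring. rewrite ?sqrt_1.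
  replace (sqrt x * 0 + sqrt (1 - x) * 1) with (sqrt (1-x)) by ring.
  replace (sqrt x * 1 + sqrt (1 - x) * 0) with (sqrt x) by ring.
  replace ((x - 1)^2) with ((1-x)^2) by ring. replace ((x-0)^2) with (x^2) by ring.
  rewrite !ln_sqrt', !ln_pow by lra. simpl INR. field.
Qed.

Lemma d_sum (a : nat -> R) N x :
  is_derive (fun y => sum_f_R0 (fun l => a l * y^(l+1)) N) x
            (sum_f_R0 (fun l => a l * INR (l+1) * x^l) N).
Proof.
  induction N.
  - simpl. auto_derive; auto. simpl. toR. ring.
  - simpl. apply (is_derive_plus (fun y => sum_f_R0 (fun l => a l * y^(l+1)) N)
        (fun y => a (S N) * y^(S (N+1)))); auto.
    auto_derive; auto. replace (S (N+1)) with (S (S N)) by lia. simpl pred. replace (N+1)%nat with (S N) by lia. simpl. toR. ring.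
Qed.

Lemma d_Vk k x : is_derive (Vk k) x (2 * cst k * LL (2*k) x).
Proof.
  unfold Vk, LL.
  apply (is_derive_scal (fun y => sum_f_R0 (fun l => (-1) ^ l * poch (INR l + 1/2) (2 * k + 1 - l)
                     / (INR (fact (2 * k + 1 - l)) * (INR l + 1)) * y ^ (l + 1)) (2*k+1))).
  eapply deriv_eq. apply d_sum. apply sum_eq. intros i Hi. unfold cf.
  rewrite plus_INR. change (INR 1) with 1. pose proof (fact_pos (2*k+1-i)). pose proof (pos_INR i).
  field. split; lra.
Qed.

Lemma A_pos x s : 0 < x < 1 -> 0 <= s <= 1 -> 0 < A x s.
Proof.
  intros Hx Hs. unfold A. pose proof (sqrt_lt_R0 x ltac:(lra)). pose proof (sqrt_lt_R0 (1-x) ltac:(lra)).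
  pose proof (sqrt_pos s). pose proof (sqrt_pos (1-s)).
  destruct (Rlt_or_le s 1).
  - pose proof (sqrt_lt_R0 (1-s) ltac:(lra)).
    assert (0 < sqrt x * sqrt (1-s)) by (apply Rmult_lt_0_compat; auto).
    assert (0 <= sqrt (1-x) * sqrt s) by (apply Rmult_le_pos; lra). lra.
  - replace s with 1 by lra. rewrite sqrt_1.
    assert (0 <= sqrt x * sqrt (1-1)) by (apply Rmult_le_pos; apply sqrt_pos). lra.
Qed.

Lemma cont_Fs x s : 0 < x < 1 -> 0 <= s <= 1 -> s <> x -> continuous (Fs x) s.
Proof.
  intros Hx Hs Hsx. unfold Fs.
  apply c_plus. apply c_minus. apply c_mult. apply continuous_const. apply cont_Th. apply cont_w.
  apply c_mult. apply continuous_const. apply c_minus. apply c_mult. apply continuous_const.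
  apply c_ln. apply A_pos; auto. unfold A. cont.
  apply c_mult. apply c_ln.
  replace ((x-s)^2) with (Rsqr (x-s)) by (unfold Rsqr; ring). apply Rsqr_pos_lt. lra.
  cont. apply continuous_const.
Qed.

Lemma RInt_der (f : R -> R) (Hf : forall s, continuous f s) s :
  is_derive (fun t => RInt f 0 t) s (f s).
Proof.
  apply is_derive_RInt with 0. apply filter_forall. intro t.
  apply (@RInt_correct R_CompleteNormedModule). apply ex_cont; auto. apply Hf.
Qed.

Lemma main_pv k x : 0 < x < 1 ->
  exists L, PV_cauchy (psik k) 0 1 x L /\ derivable_pt_lim (Vk k) x (2 * L).
Proof.
  intros Hx.
  set (n := (2*k)%nat). set (b := 1 - x). set (K := - (cst k / PI)).
  assert (Hps : forall s, psik k s = K * ((1-s)^n * w s)).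
  { intro s. unfold psik, w, K, n. ring. }
  set (G := fun s => K * (RInt (hh b n) 0 s + b^n * Fs x s)).
  set (D := fun s => K * (RInt (hh b n) 0 s + b^n * ((x - 1/2) * Th s - w s + w x * (2 * ln (A x s))))).
  assert (HGD : forall s, G s = D s - K * b^n * w x * (ln ((x-s)^2)/2)).
  { intro s. unfold G, D, Fs. ring. }
  assert (HRd := RInt_der (hh b n) (cont_hh b n)).
  assert (HRc : forall s, continuous (fun t => RInt (hh b n) 0 t) s).
  { intro s. apply cont_eq. apply derivable_continuous_pt. exists (hh b n s).
    apply is_derive_Reals, HRd. }
  set (f := fun s => psik k s / (x - s)).
  assert (Hpc : forall s, continuous (psik k) s).
  { intro s. unfold psik. cont. }
  assert (Hfc : forall s, s <> x -> continuity_pt f s).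
  { intros s Hs. apply cont_eq. unfold f. apply c_div. lra. apply Hpc. cont. }
  assert (HGc : forall s, 0 <= s <= 1 -> s <> x -> continuity_pt G s).
  { intros s Hs Hsx. apply cont_eq. unfold G. apply c_mult. apply continuous_const.
    apply c_plus. apply HRc. apply c_mult. apply continuous_const. apply cont_Fs; auto. }
  assert (HGd : forall s, 0 < s < 1 -> s <> x -> derivable_pt_lim G s (f s)).
  { intros s Hs Hsx. apply is_derive_Reals. unfold G.
    eapply deriv_eq.
    apply (is_derive_scal (fun s => RInt (hh b n) 0 s + b^n * Fs x s)).
    apply (is_derive_plus (fun s => RInt (hh b n) 0 s) (fun s => b^n * Fs x s)). apply HRd.
    apply (is_derive_scal (Fs x)). apply d_Fs; auto.
    unfold f. rewrite Hps. unfold hh.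
    assert (Hq : qq b n s = ((1-s)^n - b^n) / (x - s)).
    { unfold b. rewrite <- (qq_id x n s). field. lra. }
    rewrite Hq. unfold scal; simpl. unfold mult, plus; simpl. toR. field. lra. }
  assert (HDc : continuity_pt D x).
  { apply cont_eq. unfold D. apply c_mult. apply continuous_const.
    apply c_plus. apply HRc. apply c_mult. apply continuous_const.
    apply c_plus. apply c_minus. apply c_mult. apply continuous_const. apply cont_Th. apply cont_w.
    apply c_mult. apply continuous_const. apply c_mult. apply continuous_const.
    apply c_ln. apply A_pos; lra. unfold A. cont. }
  exists (G 1 - G 0). split.
  - intros e He.
    destruct (HDc (e/2) ltac:(lra)) as [del [Hdel HD]].
    exists (Rmin del (Rmin x (1-x))). split.
    { apply Rmin_pos; auto. apply Rmin_pos; lra. }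
    intros eps Heps.
    assert (He1 : eps < del) by (eapply Rlt_le_trans; [apply Heps | apply Rmin_l]).
    assert (He2 : eps < x) by (eapply Rlt_le_trans; [apply Heps | eapply Rle_trans; [apply Rmin_r | apply Rmin_l]]).
    assert (He3 : eps < 1 - x) by (eapply Rlt_le_trans; [apply Heps | eapply Rle_trans; [apply Rmin_r | apply Rmin_r]]).
    assert (Hex1 : ex_RInt f 0 (x - eps)).
    { apply (@ex_RInt_continuous R_CompleteNormedModule). intros z Hz.
      rewrite Rmin_left, Rmax_right in Hz by lra. apply cont_eq, Hfc. lra. }
    assert (Hex2 : ex_RInt f (x + eps) 1).
    { apply (@ex_RInt_continuous R_CompleteNormedModule). intros z Hz.
      rewrite Rmin_left, Rmax_right in Hz by lra. apply cont_eq, Hfc. lra. }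
    exists (ex_RInt_Reals_0 _ _ _ Hex1). exists (ex_RInt_Reals_0 _ _ _ Hex2).
    rewrite <- !RInt_Reals.
    change (fun s => psik k s / (x - s)) with f.
    rewrite (ftc f G 0 (x - eps)); try lra.
    2: { intros z Hz. apply Hfc. lra. }
    2: { intros z Hz. apply HGc; lra. }
    2: { intros z Hz. apply HGd; lra. }
    rewrite (ftc f G (x + eps) 1); try lra.
    2: { intros z Hz. apply Hfc. lra. }
    2: { intros z Hz. apply HGc; lra. }
    2: { intros z Hz. apply HGd; lra. }
    rewrite !HGD.
    replace ((x - (x - eps))^2) with ((x - (x + eps))^2) by ring.
    assert (H1 : Rabs (D (x - eps) - D x) < e/2).
    { apply (HD (x - eps)). split. split. exact I. lra.
      simpl. unfold R_dist. rewrite Rabs_left by lra. lra. }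
    assert (H2 : Rabs (D (x + eps) - D x) < e/2).
    { apply (HD (x + eps)). split. split. exact I. lra.
      simpl. unfold R_dist. rewrite Rabs_right by lra. lra. }
    apply Rabs_def2 in H1. apply Rabs_def2 in H2. apply Rabs_def1; lra.
  - apply is_derive_Reals. eapply deriv_eq. apply d_Vk.
    unfold G. rewrite RInt_point. unfold zero; simpl.
    replace (K * (RInt (hh b n) 0 1 + b ^ n * Fs x 1) - K * (0 + b ^ n * Fs x 0)) with
      (K * (RInt (hh b n) 0 1 + b ^ n * (Fs x 1 - Fs x 0))) by ring.
    rewrite RInt_hh, Fs_diff by auto. fold n. rewrite LL_closed. fold b.
    unfold K. pose proof PI_RGT_0. change (k + (k + 0))%nat with n. toR. field. lra.
Qed.

Theorem mainTheorem1 (k : nat) :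
  (forall x, 0 < x < 1 -> 0 < psik k x) /\
  (exists pr : Riemann_integrable (psik k) 0 1, RiemannInt pr = 1) /\
  (forall x, 0 < x < 1 ->
     exists L, PV_cauchy (psik k) 0 1 x L /\ derivable_pt_lim (Vk k) x (2 * L)).
Proof.
  pose proof (cst_neg k) as Hc. pose proof PI_RGT_0 as Hpi.
  assert (HK : 0 < - (cst k / PI)).
  { unfold Rdiv. assert (0 < / PI) by (apply Rinv_0_lt_compat; lra). nra. }
  split; [|split].
  - intros x Hx. unfold psik.
    pose proof (sqrt_lt_R0 x ltac:(lra)). pose proof (sqrt_lt_R0 (1-x) ltac:(lra)).
    pose proof (pow_lt (1-x) (2*k) ltac:(lra)).
    repeat apply Rmult_lt_0_compat; auto.
  - assert (Hpc : forall s, continuous (psik k) s).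
    { intro s. unfold psik. cont. }
    assert (Hex : ex_RInt (psik k) 0 1) by (apply ex_cont; auto).
    exists (ex_RInt_Reals_0 _ _ _ Hex). rewrite <- RInt_Reals.
    rewrite (RInt_ext _ (fun s => (- (cst k / PI)) * Mf (2*k) s + 0 * Mf (2*k) s)).
    rewrite RInt_lin2 by (apply ex_cont; apply cont_Mf).
    rewrite Mval. pose proof (cst_mm k). toR. field_simplify; lra.
    intros s _. unfold psik, Mf, w. toR. ring.
  - apply main_pv.
Qed.
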